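(* Let $a,c>0$ and $b,d<0$ be real numbers with $x_A=x_B$, and let $W_0(z)=1$, $W_1(z)=z$, $W_n(z)=(az+b)W_{n-1}(z)+(cz+d)W_{n-2}(z)$ for $n\ge2$. Then $u\le x_\Delta^-$, $u<0$, $(-1)^nW_n(u)>0$ for every $n\ge0$, and if $u\neq x_\Delta^-$ then $u$ is an isolated limit of zeros of $\{W_n(z)\}$.
   Context: Notation: $A(z)=az+b$, $B(z)=cz+d$, $x_A=-b/a$, $x_B=-d/c$, $\Delta(z)=A(z)^2+4B(z)$, $\Delta_\Delta=c^2-a^2B(x_A)$, $x_\Delta^\pm=x_A+\frac{-2c\pm2\sqrt{\Delta_\Delta}}{a^2}$ (here $x_\Delta^+=x_A=x_B$), $g(z)=(1-a)z^2-(b+c)z-d$, $\Delta_g=(b+c)^2+4d(1-a)$, $F=\Delta_g-\Delta_\Delta=d(a-2)^2+bc(2-a)+b^2$. The zeros of $g$ are $x_g^\pm=\frac{b+c}{2(1-a)}\pm\frac{\sqrt{\Delta_g}}{2|1-a|}$ if $a\neq1$, and $x_g^\pm=-d/(b+c)$ if $a=1$ and $b+c\ne0$. Define $u=x_\Delta^-$ if $a<2$ and $F\le0$; $u=x_g^+$ if $a<1$ and $F>0$; $u=x_g^-$ otherwise. For $z=re^{i\theta}$, $\theta\in(-\pi,\pi]$, $\sqrt z:=\sqrt r e^{i\theta/2}$, and $\lambda_\pm(z)=\frac{A(z)\pm\sqrt{\Delta(z)}}{2}$. A number $z^*$ is a limit of zeros if there exist zeros $z_n$ of $W_n$ with $z_n\to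 z^*$; it is isolated if $|\lambda_+(z^* )|\ne|\lambda_-(z^* )|$. *)

(* Defs.v *)
From Stdlib Require Import Reals Lra.
Open Scope R_scope.

Definition Af (a b x : R) : R := a * x + b.
Definition Bf (c d x : R) : R := c * x + d.
Definition xA (a b : R) : R := - b / a.
Definition xB (c d : R) : R := - d / c.
Definition DeltaDelta (a b c d : R) : R := c ^ 2 - a ^ 2 * Bf c d (xA a b).
Definition xDeltam (a b c d : R) : R :=
  xA a b + (- 2 * c - 2 * sqrt (DeltaDelta a b c d)) / a ^ 2.
Definition xDeltap (a b c d : R) : R :=
  xA a b + (- 2 * c + 2 * sqrt (DeltaDelta a b c d)) / a ^ 2.
Definition Deltag (a b c d : R) : R := (b + c) ^ 2 + 4 * d * (1 - a).
Definition Fq (a b c d : R) : R := Deltag a b c d - DeltaDelta a b c d.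

(* zeros of g(z) = (1-a)z^2 - (b+c)z - d *)
Definition xgp (a b c d : R) : R :=
  if Req_EM_T a 1 then - d / (b + c)
  else (b + c) / (2 * (1 - a)) + sqrt (Deltag a b c d) / (2 * Rabs (1 - a)).
Definition xgm (a b c d : R) : R :=
  if Req_EM_T a 1 then - d / (b + c)
  else (b + c) / (2 * (1 - a)) - sqrt (Deltag a b c d) / (2 * Rabs (1 - a)).

Definition uu (a b c d : R) : R :=
  if Rlt_dec a 2 then
    if Rle_dec (Fq a b c d) 0 then xDeltam a b c d
    else if Rlt_dec a 1 then xgp a b c d else xgm a b c d
  else xgm a b c d.

Fixpoint Wr (a b c d : R) (n : nat) (x : R) : R :=
  match n with
  | O => 1
  | S m => match m with
           | O => x
           | S k => Af a b x * Wr a b c d m x + Bf c d x * Wr a b c d k x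
           end
  end.

Definition C := (R * R)%type.
Definition RtoC (x : R) : C := (x, 0).
Definition Cadd (z w : C) : C := (fst z + fst w, snd z + snd w).
Definition Csub (z w : C) : C := (fst z - fst w, snd z - snd w).
Definition Cmul (z w : C) : C :=
  (fst z * fst w - snd z * snd w, fst z * snd w + snd z * fst w).
Definition Cscal (r : R) (z : C) : C := (r * fst z, r * snd z).
Definition Cmod (z : C) : R := sqrt (fst z ^ 2 + snd z ^ 2).
(* principal square root: for z = r e^{i theta}, theta in (-pi,pi],
   sqrt z = sqrt r e^{i theta/2}; written out in Cartesian form *)
Definition Csqrt (z : C) : C :=
  (sqrt ((Cmod z + fst z) / 2),
   (if Rle_dec 0 (snd z) then 1 else -1) * sqrt ((Cmod z - fst z) / 2)).

Definition Ac (a b : R) (z : C) : C := Cadd (Cscal a z) (RtoC b).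
Definition Bc (c d : R) (z : C) : C := Cadd (Cscal c z) (RtoC d).
Definition Deltac (a b c d : R) (z : C) : C :=
  Cadd (Cmul (Ac a b z) (Ac a b z)) (Cscal 4 (Bc c d z)).
Definition lamp (a b c d : R) (z : C) : C :=
  Cscal (/ 2) (Cadd (Ac a b z) (Csqrt (Deltac a b c d z))).
Definition lamm (a b c d : R) (z : C) : C :=
  Cscal (/ 2) (Csub (Ac a b z) (Csqrt (Deltac a b c d z))).

Fixpoint Wc (a b c d : R) (n : nat) (z : C) : C :=
  match n with
  | O => RtoC 1
  | S m => match m with
           | O => z
           | S k => Cadd (Cmul (Ac a b z) (Wc a b c d m z))
                         (Cmul (Bc c d z) (Wc a b c d k z))
           end
  end.

Definition limit_of_zeros (a b c d : R) (zs : C) : Prop :=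
  exists (z : nat -> C) (N : nat),
    (forall n, (N <= n)%nat -> Wc a b c d n (z n) = RtoC 0) /\
    (forall eps, 0 < eps -> exists M, forall n, (M <= n)%nat ->
        Cmod (Csub (z n) zs) < eps).

Definition isolated (a b c d : R) (zs : C) : Prop :=
  Cmod (lamp a b c d zs) <> Cmod (lamm a b c d zs).

(* Main.v *)
Require Import Defs.
From Stdlib Require Import Reals Lra Lia Psatz ClassicalEpsilon ZArith.
Open Scope R_scope.

Lemma Wr_SS a b c d n x : Wr a b c d (S (S n)) x =
  Af a b x * Wr a b c d (S n) x + Bf c d x * Wr a b c d n x.
Proof. reflexivity. Qed.

Lemma Wr_closed a b c d x L1 L2 : L1 + L2 = Af a b x -> L1 * L2 = - Bf c d x ->
  forall n, (L1 - L2) * Wr a b c d n x = (x - L2) * L1 ^ n - (x - L1) * L2 ^ n.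
Proof.
  intros H1 H2.
  assert (forall n, (L1 - L2) * Wr a b c d n x = (x - L2) * L1 ^ n - (x - L1) * L2 ^ n /\
                    (L1 - L2) * Wr a b c d (S n) x = (x - L2) * L1 ^ (S n) - (x - L1) * L2 ^ (S n)).
  { induction n as [|n [IH0 IH1]].
    - split; simpl; ring.
    - split; [exact IH1|]. rewrite Wr_SS. rewrite <- H1.
      replace (Bf c d x) with (-(L1*L2)) by lra.
      replace ((L1 - L2) * ((L1 + L2) * Wr a b c d (S n) x + - (L1 * L2) * Wr a b c d n x))
        with ((L1 + L2) * ((L1 - L2) * Wr a b c d (S n) x) - L1 * L2 * ((L1 - L2) * Wr a b c d n x)) by ring.
      rewrite IH0, IH1. simpl. ring. }
  intro n; apply H.
Qed.

Lemma Wr_root a b c d u : u * u = Af a b u * u + Bf c d u ->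
  forall n, Wr a b c d n u = u ^ n.
Proof.
  intros H.
  assert (forall n, Wr a b c d n u = u ^ n /\ Wr a b c d (S n) u = u ^ (S n)).
  { induction n as [|n [IH0 IH1]].
    - split; simpl; ring.
    - split; [exact IH1|]. rewrite Wr_SS, IH0, IH1.
      replace (u ^ S (S n)) with (u ^ n * (u * u)) by (simpl; ring).
      rewrite H. simpl; ring. }
  intro n; apply H0.
Qed.

Lemma Wr_double a b c d u l : Af a b u = 2 * l -> Bf c d u = - (l * l) ->
  forall n, Wr a b c d n u * l = l ^ n * (l + INR n * (u - l)).
Proof.
  intros H1 H2.
  assert (forall n, Wr a b c d n u * l = l ^ n * (l + INR n * (u - l)) /\
                    Wr a b c d (S n) u * l = l ^ (S n) * (l + INR (S n) * (u - l))).
  { induction n as [|n [IH0 IH1]].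
    - split; simpl; ring.
    - split; [exact IH1|]. rewrite Wr_SS, H1, H2.
      replace ((2 * l * Wr a b c d (S n) u + - (l * l) * Wr a b c d n u) * l)
        with (2 * l * (Wr a b c d (S n) u * l) - l * l * (Wr a b c d n u * l)) by ring.
      rewrite IH0, IH1. rewrite !S_INR. simpl. ring. }
  intro n; apply H.
Qed.

Lemma Wr_cont a b c d : forall n, continuity (Wr a b c d n).
Proof.
  assert (HA : continuity (Af a b)).
  { change (continuity (plus_fct (mult_fct (fct_cte a) (fun x => x)) (fct_cte b))).
    apply continuity_plus; [apply continuity_mult|];
    try (apply derivable_continuous; apply derivable_id); apply continuity_const; intros x y; reflexivity. }
  assert (HB : continuity (Bf c d)).
  { change (continuity (plus_fct (mult_fct (fct_cte c) (fun x => x)) (fct_cte d))).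
    apply continuity_plus; [apply continuity_mult|];
    try (apply derivable_continuous; apply derivable_id); apply continuity_const; intros x y; reflexivity. }
  assert (forall n, continuity (Wr a b c d n) /\ continuity (Wr a b c d (S n))).
  { induction n as [|n [IH0 IH1]].
    - split.
      + apply continuity_const; intros x y; reflexivity.
      + change (continuity (fun x : R => x)). apply derivable_continuous; apply derivable_id.
    - split; [exact IH1|].
      change (continuity (plus_fct (mult_fct (Af a b) (Wr a b c d (S n)))
                                   (mult_fct (Bf c d) (Wr a b c d n)))).
      apply continuity_plus; apply continuity_mult; assumption. }
  intro n; apply H.
Qed.

Lemma Wc_real a b c d : forall n x, Wc a b c d n (RtoC x) = RtoC (Wr a b c d n x).
Proof.
  intros n0 x.
  assert (forall n, Wc a b c d n (RtoC x) = RtoC (Wr a b c d n x) /\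
                    Wc a b c d (S n) (RtoC x) = RtoC (Wr a b c d (S n) x)).
  { induction n as [|n [IH0 IH1]].
    - split; reflexivity.
    - split; [exact IH1|].
      change (Wc a b c d (S (S n)) (RtoC x)) with
        (Cadd (Cmul (Ac a b (RtoC x)) (Wc a b c d (S n) (RtoC x)))
              (Cmul (Bc c d (RtoC x)) (Wc a b c d n (RtoC x)))).
      rewrite IH0, IH1, Wr_SS.
      unfold Cadd, Cmul, Ac, Bc, Cscal, RtoC, Af, Bf; simpl. f_equal; ring. }
  apply (H n0).
Qed.

Definition gf a b c d z := z * z - Af a b z * z - Bf c d z.

Lemma PP a b c d z : Af a b z < 0 -> 0 < Af a b z * Af a b z + 4 * Bf c d z ->
  0 < 2 * z - Af a b z -> gf a b c d z <> 0 ->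
  exists N, forall n, (N <= n)%nat -> (-1) ^ n * Wr a b c d n z * gf a b c d z < 0.
Proof.
  intros HA HD Hphi Hg.
  set (A := Af a b z) in *. set (B := Bf c d z) in *. set (g := gf a b c d z) in *.
  set (D := A * A + 4 * B) in *.
  set (s := sqrt D).
  assert (Hs : 0 < s) by (apply sqrt_lt_R0; lra).
  assert (Hss : s * s = D) by (apply sqrt_sqrt; lra).
  set (L1 := (A + s) / 2). set (L2 := (A - s) / 2).
  assert (HS : L1 + L2 = Af a b z) by (unfold L1, L2, A; field).
  assert (HP : L1 * L2 = - Bf c d z).
  { unfold L1, L2. fold B. replace ((A + s) / 2 * ((A - s) / 2)) with ((A*A - s*s)/4) by field.
    rewrite Hss. unfold D. field. }
  assert (HC := Wr_closed a b c d z L1 L2 HS HP).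
  assert (HL2 : L2 < 0) by (unfold L2; lra).
  assert (Hd : L1 - L2 = s) by (unfold L1, L2; field).
  assert (HzL2 : 0 < z - L2) by (unfold L2; lra).
  assert (Hgf : g = (z - L1) * (z - L2)).
  { unfold g, gf. fold A B.
    replace B with (- (L1 * L2)) by (unfold B; lra).
    replace A with (L1 + L2) by (unfold A; lra). ring. }
  set (q := L1 / L2).
  assert (Hq : q * L2 = L1) by (unfold q; field; lra).
  assert (Hq1 : Rabs q < 1).
  { apply Rabs_def1.
    - assert (L2 < L1) by (unfold L1, L2; lra). nra.
    - assert (L1 < - L2) by (unfold L1, L2; lra). nra. }
  assert (HzL1 : z - L1 <> 0) by (intro H0; apply Hg; rewrite Hgf, H0; ring).
  assert (Hy : 0 < (z - L1) * (z - L1) / Rabs g).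
  { apply Rdiv_lt_0_compat. nra. apply Rabs_pos_lt; exact Hg. }
  destruct (pow_lt_1_zero q Hq1 _ Hy) as [N HN].
  exists N. intros n Hn.
  specialize (HN n Hn). specialize (HC n). rewrite Hd in HC.
  assert (E1 : L1 ^ n = q ^ n * L2 ^ n) by (rewrite <- Rpow_mult_distr, Hq; reflexivity).
  assert (E2 : (-1) ^ n * L2 ^ n = (- L2) ^ n) by (rewrite <- Rpow_mult_distr; f_equal; ring).
  assert (HPpos : 0 < (- L2) ^ n) by (apply pow_lt; lra).
  assert (Hmain : s * ((-1) ^ n * Wr a b c d n z * g) =
                  (- L2) ^ n * ((z - L2) * (q ^ n * g) - (z - L1) * g)).
  { rewrite <- E2.
    replace (s * ((-1) ^ n * Wr a b c d n z * g)) with ((-1) ^ n * g * (s * Wr a b c d n z)) by ring.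
    rewrite HC, E1. ring. }
  assert (Hbd : q ^ n * g < (z - L1) * (z - L1)).
  { apply Rle_lt_trans with (Rabs (q ^ n * g)). apply Rle_abs.
    rewrite Rabs_mult.
    assert (0 < Rabs g) by (apply Rabs_pos_lt; exact Hg).
    apply Rmult_lt_compat_r with (r := Rabs g) in HN; [|assumption].
    unfold Rdiv in HN. rewrite Rmult_assoc, Rinv_l in HN; lra. }
  assert (Hin : (z - L2) * (q ^ n * g) - (z - L1) * g < 0).
  { rewrite Hgf at 2. nra. }
  assert (s * ((-1) ^ n * Wr a b c d n z * g) < 0).
  { rewrite Hmain. nra. }
  nra.
Qed.

Fixpoint fsel (N : nat -> nat) (n k : nat) : nat :=
  match k with
  | O => O
  | S k' => if Nat.leb (N (S k')) n then S k' else fsel N n k'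
  end.

Lemma fsel_ok N n : (N O <= n)%nat -> forall k, (N (fsel N n k) <= n)%nat.
Proof.
  intros H0 k; induction k as [|k IH]; simpl; auto.
  destruct (Nat.leb (N (S k)) n) eqn:E; auto. apply Nat.leb_le; auto.
Qed.

Lemma fsel_ge N n : forall k j, (j <= k)%nat -> (N j <= n)%nat -> (j <= fsel N n k)%nat.
Proof.
  induction k as [|k IH]; intros j Hj HN; simpl; [lia|].
  destruct (Nat.leb (N (S k)) n) eqn:E; auto.
  apply Nat.leb_gt in E. assert (j <> S k) by (intro; subst; lia).
  apply IH; lia.
Qed.

Lemma Cmod_real x : Cmod (Csub (RtoC x) (RtoC 0)) = Rabs x.
Proof.
  unfold Cmod, Csub, RtoC; simpl.
  replace ((x - 0) * ((x - 0) * 1) + (0 - 0) * ((0 - 0) * 1)) with (x ^ 2) by ring.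
  rewrite <- sqrt_Rsqr_abs. unfold Rsqr. f_equal. ring.
Qed.

Lemma DIAG a b c d u :
  (forall k : nat, exists N, forall n, (N <= n)%nat ->
     exists x, Rabs (x - u) < / (INR k + 1) /\ Wr a b c d n x = 0) ->
  limit_of_zeros a b c d (RtoC u).
Proof.
  intros H.
  set (N := fun k => proj1_sig (constructive_indefinite_description _ (H k))).
  assert (HN : forall k n, (N k <= n)%nat ->
     exists x, Rabs (x - u) < / (INR k + 1) /\ Wr a b c d n x = 0).
  { intros k. unfold N. destruct (constructive_indefinite_description _ (H k)) as [M HM]. exact HM. }
  set (P := fun n x => Rabs (x - u) < / (INR (fsel N n n) + 1) /\ Wr a b c d n x = 0).
  exists (fun n => RtoC (epsilon (inhabits u) (P n))), (N O).
  split.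
  - intros n Hn. rewrite Wc_real.
    assert (HP : P n (epsilon (inhabits u) (P n))).
    { apply epsilon_spec. apply HN. apply fsel_ok. exact Hn. }
    destruct HP as [_ HP]. rewrite HP. reflexivity.
  - intros eps Heps.
    destruct (archimed (/ eps)) as [Hup _].
    assert (H0up : (0 <= up (/ eps))%Z).
    { apply le_IZR. assert (0 < / eps) by (apply Rinv_0_lt_compat; lra). lra. }
    set (k := Z.to_nat (up (/ eps))).
    assert (Hk : / eps < INR k + 1).
    { unfold k. rewrite INR_IZR_INZ, Z2Nat.id by exact H0up. lra. }
    exists (Nat.max (N O) (Nat.max (N k) k)).
    intros n Hn.
    assert (HP : P n (epsilon (inhabits u) (P n))).
    { apply epsilon_spec. apply HN. apply fsel_ok. lia. }
    destruct HP as [HP _].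
    assert (Hge : (k <= fsel N n n)%nat) by (apply fsel_ge; lia).
    set (x := epsilon (inhabits u) (P n)) in *.
    replace (Csub (RtoC x) (RtoC u)) with (Csub (RtoC (x - u)) (RtoC 0))
      by (unfold Csub, RtoC; simpl; f_equal; ring).
    rewrite Cmod_real.
    apply Rlt_le_trans with (1 := HP).
    apply le_INR in Hge.
    assert (0 < INR k + 1) by (pose proof (pos_INR k); lra).
    apply Rle_trans with (/ (INR k + 1)).
    + apply Rinv_le_contravar; lra.
    + rewrite <- (Rinv_inv eps). apply Rlt_le, Rinv_lt_contravar.
      * apply Rmult_lt_0_compat; [apply Rinv_0_lt_compat; lra | lra].
      * exact Hk.
Qed.

Lemma LOC a b c d p u : 0 < a -> 0 < c -> 0 < p -> b = - (a * p) -> d = - (c * p) ->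
  gf a b c d u = 0 -> u < 0 -> 0 < 2 * u - Af a b u -> 0 < Deltag a b c d ->
  forall k : nat, exists N, forall n, (N <= n)%nat ->
     exists x, Rabs (x - u) < / (INR k + 1) /\ Wr a b c d n x = 0.
Proof.
  intros Ha Hc Hp Hb Hd Hg Hu Hphi HDg k.
  set (phi := 2 * u - Af a b u) in *.
  set (Dg := Deltag a b c d) in *.
  set (Qu := a * a * (u - p) + 4 * c).
  assert (HQu : Qu < 0).
  { assert (HDu : Af a b u * Af a b u + 4 * Bf c d u = phi * phi - 4 * gf a b c d u)
      by (unfold phi, gf; ring).
    rewrite Hg in HDu. unfold Af, Bf in HDu. rewrite Hb, Hd in HDu.
    unfold Qu. nra. }
  set (g1 := 2 * (1 - a) * u - (b + c)).
  assert (Hg1 : g1 * g1 = Dg).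
  { assert (g1 * g1 - Dg = 4 * (1 - a) * gf a b c d u)
      by (unfold g1, Dg, Deltag, gf, Af, Bf; ring).
    rewrite Hg in H. lra. }
  set (dphi := phi / (Rabs (2 - a) + 1)).
  set (dg := Rmin 1 (Dg / ((1 - a) * (1 - a) + 1))).
  set (dQ := - Qu / (a * a)).
  set (del := Rmin (Rmin (- u) dQ) (Rmin dphi dg)).
  assert (Hab : 0 <= Rabs (2 - a)) by apply Rabs_pos.
  assert (HdQ : 0 < dQ) by (unfold dQ; apply Rdiv_lt_0_compat; nra).
  assert (Hdphi : 0 < dphi) by (unfold dphi; apply Rdiv_lt_0_compat; lra).
  assert (Hdg : 0 < dg).
  { unfold dg. apply Rmin_glb_lt; [lra|]. apply Rdiv_lt_0_compat; nra. }
  assert (Hdel : 0 < del).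
  { unfold del. apply Rmin_glb_lt; apply Rmin_glb_lt; lra. }
  assert (Hdel1 : del <= - u) by (unfold del; eapply Rle_trans; [apply Rmin_l|apply Rmin_l]).
  assert (Hdel2 : del <= dQ) by (unfold del; eapply Rle_trans; [apply Rmin_l|apply Rmin_r]).
  assert (Hdel3 : del <= dphi) by (unfold del; eapply Rle_trans; [apply Rmin_r|apply Rmin_l]).
  assert (Hdel4 : del <= dg) by (unfold del; eapply Rle_trans; [apply Rmin_r|apply Rmin_r]).
  assert (COND : forall z, Rabs (z - u) < del ->
     Af a b z < 0 /\ 0 < Af a b z * Af a b z + 4 * Bf c d z /\ 0 < 2 * z - Af a b z).
  { intros z Hz.
    assert (Hz1 := Rle_abs (z - u)).
    assert (Hz2 : - (z - u) <= Rabs (z - u)) by (rewrite <- Rabs_Ropp; apply Rle_abs).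
    assert (Hzp : z < p) by lra.
    assert (HQz : a * a * (z - p) + 4 * c < 0).
    { assert (a * a * Rabs (z - u) < a * a * dQ) by (apply Rmult_lt_compat_l; nra).
      assert (a * a * dQ = - Qu) by (unfold dQ; field; lra).
      unfold Qu in *. nra. }
    unfold Af, Bf. rewrite Hb, Hd. split; [nra|split; [nra|]].
    assert (Rabs (2 - a) * Rabs (z - u) < phi).
    { apply Rle_lt_trans with (Rabs (2 - a) * dphi).
      apply Rmult_le_compat_l; lra.
      assert ((Rabs (2 - a) + 1) * dphi = phi) by (unfold dphi; field; lra). nra. }
    rewrite <- Rabs_mult in H.
    assert (Hm1 := Rle_abs ((2 - a) * (z - u))).
    assert (Hm2 : - ((2 - a) * (z - u)) <= Rabs ((2 - a) * (z - u))) by (rewrite <- Rabs_Ropp; apply Rle_abs).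
    unfold phi, Af in *. rewrite Hb in *. nra. }
  set (e := Rmin (del / 2) (/ (INR k + 2))).
  assert (Hk0 : 0 <= INR k) by apply pos_INR.
  assert (He0 : 0 < e).
  { unfold e. apply Rmin_glb_lt; [lra|]. apply Rinv_0_lt_compat; lra. }
  assert (He1 : e <= del / 2) by apply Rmin_l.
  assert (He2 : e < / (INR k + 1)).
  { apply Rle_lt_trans with (/ (INR k + 2)); [apply Rmin_r|].
    apply Rinv_lt_contravar; nra. }
  set (z1 := u - e). set (z2 := u + e).
  assert (Hz1 : Rabs (z1 - u) < del) by (unfold z1; replace (u - e - u) with (- e) by ring;
     rewrite Rabs_Ropp, Rabs_right; lra).
  assert (Hz2 : Rabs (z2 - u) < del) by (unfold z2; replace (u + e - u) with e by ring;
     rewrite Rabs_right; lra).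
  assert (Hgg : gf a b c d z1 * gf a b c d z2 < 0).
  { assert (E1 : gf a b c d z1 = gf a b c d u - e * g1 + (1 - a) * (e * e))
      by (unfold z1, gf, g1, Af, Bf; ring).
    assert (E2 : gf a b c d z2 = gf a b c d u + e * g1 + (1 - a) * (e * e))
      by (unfold z2, gf, g1, Af, Bf; ring).
    rewrite E1, E2, Hg.
    assert (Hdg1 : dg <= 1) by (unfold dg; apply Rmin_l).
    assert (Hdg2 : dg <= Dg / ((1 - a) * (1 - a) + 1)) by (unfold dg; apply Rmin_r).
    assert (He3 : e < 1) by lra.
    assert (He4 : e * ((1 - a) * (1 - a) + 1) < Dg).
    { assert (e < Dg / ((1 - a) * (1 - a) + 1)) by lra.
      apply Rmult_lt_compat_r with (r := ((1 - a) * (1 - a) + 1)) in H; [|nra].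
      unfold Rdiv in H. rewrite Rmult_assoc, Rinv_l in H; nra. }
    assert (((1 - a) * (1 - a)) * (e * e) <= ((1 - a) * (1 - a)) * e) by (apply Rmult_le_compat_l; [apply Rle_0_sqr | nra]).
    replace ((0 - e * g1 + (1 - a) * (e * e)) * (0 + e * g1 + (1 - a) * (e * e)))
      with (e * e * (((1 - a) * (1 - a)) * (e * e) - g1 * g1)) by ring.
    rewrite Hg1.
    assert (0 < e * e) by nra. nra. }
  assert (Hg1n : gf a b c d z1 <> 0) by (intro H0; rewrite H0 in Hgg; lra).
  assert (Hg2n : gf a b c d z2 <> 0) by (intro H0; rewrite H0 in Hgg; lra).
  destruct (COND z1 Hz1) as [A1 [D1 P1]].
  destruct (COND z2 Hz2) as [A2 [D2 P2]].
  destruct (PP a b c d z1 A1 D1 P1 Hg1n) as [N1 HN1].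
  destruct (PP a b c d z2 A2 D2 P2 Hg2n) as [N2 HN2].
  exists (Nat.max N1 N2). intros n Hn.
  specialize (HN1 n ltac:(lia)). specialize (HN2 n ltac:(lia)).
  assert (Ht : (-1) ^ n * (-1) ^ n = 1).
  { rewrite <- Rpow_mult_distr. replace (-1 * -1) with 1 by ring. apply pow1. }
  set (t := (-1) ^ n) in *.
  set (W1 := Wr a b c d n z1) in *. set (W2 := Wr a b c d n z2) in *.
  assert (HW : W1 * W2 <= 0).
  { assert (0 < (t * W1 * gf a b c d z1) * (t * W2 * gf a b c d z2)) by nra.
    replace ((t * W1 * gf a b c d z1) * (t * W2 * gf a b c d z2))
      with ((t * t) * (W1 * W2) * (gf a b c d z1 * gf a b c d z2)) in H by ring.
    rewrite Ht in H. nra. }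
  destruct (IVT_cor (Wr a b c d n) z1 z2 (Wr_cont a b c d n) ltac:(unfold z1, z2; lra) HW)
    as [x [Hx Hx0]].
  exists x. split; [|exact Hx0].
  apply Rle_lt_trans with e; [|exact He2].
  apply Rabs_le. unfold z1, z2 in Hx. lra.
Qed.

Lemma ISO a b c d u : Af a b u < 0 -> 0 < Af a b u * Af a b u + 4 * Bf c d u ->
  isolated a b c d (RtoC u).
Proof.
  intros HA HD.
  set (D := Af a b u * Af a b u + 4 * Bf c d u) in *.
  assert (HDe : Deltac a b c d (RtoC u) = (D, 0)).
  { unfold Deltac, Cadd, Cmul, Ac, Bc, Cscal, RtoC, D, Af, Bf; simpl. f_equal; ring. }
  assert (HS : Csqrt (D, 0) = (sqrt D, 0)).
  { unfold Csqrt, Cmod; simpl.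
    replace (D * (D * 1) + 0 * (0 * 1)) with (D ^ 2) by ring.
    rewrite sqrt_pow2 by lra.
    destruct (Rle_dec 0 0) as [_|n]; [|lra].
    replace ((D - D) / 2) with 0 by field. rewrite sqrt_0.
    f_equal; [f_equal; field | ring]. }
  unfold isolated, lamp, lamm. rewrite HDe, HS.
  assert (Hs : 0 < sqrt D) by (apply sqrt_lt_R0; lra).
  set (s := sqrt D) in *.
  unfold Cmod, Cscal, Cadd, Csub, Ac, RtoC; simpl.
  rewrite !Rmult_1_r.
  intro H. apply sqrt_inj in H;
    [| apply Rplus_le_le_0_compat; apply Rle_0_sqr | apply Rplus_le_le_0_compat; apply Rle_0_sqr].
  unfold Af in HA.
  assert (0 < -(a*u+b) * s) by nra. nra.
Qed.

Lemma GEN a b c d p u : 0 < a -> 0 < c -> 0 < p -> b = - (a * p) -> d = - (c * p) ->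
  gf a b c d u = 0 -> u < 0 -> 0 < 2 * u - Af a b u -> 0 < Deltag a b c d ->
  a * a * (u - p) + 4 * c < 0 /\
  (forall n : nat, 0 < (-1) ^ n * Wr a b c d n u) /\
  limit_of_zeros a b c d (RtoC u) /\ isolated a b c d (RtoC u).
Proof.
  intros Ha Hc Hp Hb Hd Hg Hu Hphi HDg.
  set (phi := 2 * u - Af a b u) in *.
  assert (HDu : Af a b u * Af a b u + 4 * Bf c d u = phi * phi - 4 * gf a b c d u)
      by (unfold phi, gf; ring).
  rewrite Hg in HDu.
  assert (HQ : a * a * (u - p) + 4 * c < 0).
  { unfold Af, Bf in HDu. rewrite Hb, Hd in HDu. nra. }
  split; [exact HQ|]. split; [|split].
  - intro n. rewrite (Wr_root a b c d u) by (unfold gf in Hg; lra).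
    rewrite <- Rpow_mult_distr. apply pow_lt. lra.
  - apply DIAG. apply (LOC a b c d p u); assumption.
  - apply ISO.
    + unfold Af. rewrite Hb. nra.
    + rewrite HDu. nra.
Qed.

Lemma sq_lt X Y : 0 < X -> 0 <= Y -> Y * Y < X * X -> Y < X.
Proof. intros. nra. Qed.

Lemma gf_scaled a b c d u K : gf a b c d u * (K * K) =
  (1 - a) * (u * K) * (u * K) - (b + c) * (u * K) * K - d * (K * K).
Proof. unfold gf, Af, Bf; ring. Qed.

Lemma Dg_val a c p : Deltag a (- (a * p)) c (- (c * p)) = (c - a * p) ^ 2 - 4 * c * p * (1 - a).
Proof. unfold Deltag; ring. Qed.

Lemma xA_val a p : 0 < a -> xA a (- (a * p)) = p.
Proof. intros; unfold xA; field; lra. Qed.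

Lemma DD_val a c p : 0 < a -> DeltaDelta a (- (a * p)) c (- (c * p)) = c ^ 2.
Proof. intros. unfold DeltaDelta. rewrite xA_val by auto. unfold Bf; ring. Qed.

Lemma xDm_val a c p : 0 < a -> 0 < c -> xDeltam a (- (a * p)) c (- (c * p)) = p - 4 * c / (a * a).
Proof.
  intros. unfold xDeltam. rewrite DD_val, xA_val by auto.
  rewrite sqrt_pow2 by lra. field; lra.
Qed.

Lemma Fq_val a c p : 0 < a -> Fq a (- (a * p)) c (- (c * p)) = p * (a * a * p - 2 * c * (2 - a)).
Proof. intros. unfold Fq. rewrite DD_val by auto. unfold Deltag. ring. Qed.

Lemma finish a c p u : 0 < a -> 0 < c -> 0 < p ->
  gf a (- (a * p)) c (- (c * p)) u = 0 -> u < 0 ->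
  0 < 2 * u - Af a (- (a * p)) u -> 0 < Deltag a (- (a * p)) c (- (c * p)) ->
  u <= xDeltam a (- (a * p)) c (- (c * p)) /\ u < 0 /\
  (forall n : nat, 0 < (-1) ^ n * Wr a (- (a * p)) c (- (c * p)) n u) /\
  (u <> xDeltam a (- (a * p)) c (- (c * p)) ->
     limit_of_zeros a (- (a * p)) c (- (c * p)) (RtoC u) /\
     isolated a (- (a * p)) c (- (c * p)) (RtoC u)).
Proof.
  intros Ha Hc Hp Hg Hu Hphi HD.
  destruct (GEN a _ c _ p u Ha Hc Hp eq_refl eq_refl Hg Hu Hphi HD) as [HQ [Hpos [Hlim Hiso]]].
  rewrite xDm_val by auto.
  split; [|split; [exact Hu|split; [exact Hpos|intros _; split; assumption]]].
  assert (4 * c / (a * a) < p - u).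
  { apply Rmult_lt_reg_r with (a * a); [nra|]. unfold Rdiv. rewrite Rmult_assoc, Rinv_l by nra. nra. }
  lra.
Qed.

Lemma case1 a c p : 0 < a -> 0 < c -> 0 < p ->
  p * (a * a * p - 2 * c * (2 - a)) <= 0 ->
  let u := xDeltam a (- (a * p)) c (- (c * p)) in
  u <= xDeltam a (- (a * p)) c (- (c * p)) /\ u < 0 /\
  (forall n : nat, 0 < (-1) ^ n * Wr a (- (a * p)) c (- (c * p)) n u) /\
  (u <> xDeltam a (- (a * p)) c (- (c * p)) ->
     limit_of_zeros a (- (a * p)) c (- (c * p)) (RtoC u) /\
     isolated a (- (a * p)) c (- (c * p)) (RtoC u)).
Proof.
  intros Ha Hc Hp HF u.
  split; [unfold u; lra|].
  split; [| split; [|intros H; exfalso; apply H; reflexivity]].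
  - unfold u. rewrite xDm_val by auto.
    assert (HX : a * a * p - 2 * c * (2 - a) <= 0) by nra.
    assert (Hi : 0 < / (a * a)) by (apply Rinv_0_lt_compat; nra).
    assert (E : p - 4 * c / (a * a) = - (2 * c / a) + (a * a * p - 2 * c * (2 - a)) * / (a * a))
      by (field; lra).
    assert (0 < 2 * c / a) by (apply Rdiv_lt_0_compat; lra).
    nra.
  - intro n. unfold u. rewrite xDm_val by auto.
    set (w := p - 4 * c / (a * a)). set (l := - (2 * c / a)).
    assert (HA : Af a (- (a * p)) w = 2 * l) by (unfold Af, w, l; field; lra).
    assert (HB : Bf c (- (c * p)) w = - (l * l)) by (unfold Bf, w, l; field; lra).
    assert (HX : a * a * p - 2 * c * (2 - a) <= 0) by nra.
    assert (Hi : 0 < / (a * a)) by (apply Rinv_0_lt_compat; nra).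
    assert (E : w - l = (a * a * p - 2 * c * (2 - a)) * / (a * a)) by (unfold w, l; field; lra).
    assert (Hwl : w - l <= 0) by (rewrite E; nra).
    assert (Hl : l < 0) by (unfold l; assert (0 < 2 * c / a) by (apply Rdiv_lt_0_compat; lra); lra).
    pose proof (Wr_double a (- (a * p)) c (- (c * p)) w l HA HB n) as HW.
    assert (Ht : (-1) ^ n * l ^ n = (- l) ^ n) by (rewrite <- Rpow_mult_distr; f_equal; ring).
    assert (Hpos : 0 < (- l) ^ n) by (apply pow_lt; lra).
    assert (Hn : 0 <= INR n) by apply pos_INR.
    assert (Hk : l + INR n * (w - l) < 0) by nra.
    assert (HM : ((-1) ^ n * Wr a (- (a * p)) c (- (c * p)) n w) * l = (- l) ^ n * (l + INR n * (w - l))).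
    { rewrite <- Ht. rewrite Rmult_assoc, HW. ring. }
    assert (((-1) ^ n * Wr a (- (a * p)) c (- (c * p)) n w) * l < 0) by (rewrite HM; nra).
    nra.
Qed.

Lemma Dpos a c p : 0 < a -> 0 < c -> 0 < p -> 0 < p * (a * a * p - 2 * c * (2 - a)) ->
  0 < Deltag a (- (a * p)) c (- (c * p)).
Proof.
  intros. assert (Deltag a (- (a * p)) c (- (c * p)) = Fq a (- (a * p)) c (- (c * p)) + c ^ 2).
  { unfold Fq. rewrite DD_val by auto. ring. }
  rewrite H3, Fq_val by auto. nra.
Qed.

Lemma case2 a c p : 0 < a -> 0 < c -> 0 < p -> a < 1 ->
  0 < p * (a * a * p - 2 * c * (2 - a)) ->
  let u := xgp a (- (a * p)) c (- (c * p)) in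
  u <= xDeltam a (- (a * p)) c (- (c * p)) /\ u < 0 /\
  (forall n : nat, 0 < (-1) ^ n * Wr a (- (a * p)) c (- (c * p)) n u) /\
  (u <> xDeltam a (- (a * p)) c (- (c * p)) ->
     limit_of_zeros a (- (a * p)) c (- (c * p)) (RtoC u) /\
     isolated a (- (a * p)) c (- (c * p)) (RtoC u)).
Proof.
  intros Ha Hc Hp Ha1 HF u.
  assert (HD := Dpos a c p Ha Hc Hp HF).
  set (D := Deltag a (- (a * p)) c (- (c * p))) in *.
  set (r := sqrt D).
  assert (Hr : 0 < r) by (apply sqrt_lt_R0; lra).
  assert (Hrr : r * r = D) by (apply sqrt_sqrt; lra).
  assert (HDv : D = (c - a * p) ^ 2 - 4 * c * p * (1 - a)) by (unfold D; apply Dg_val).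
  set (K := 2 * (1 - a)).
  assert (HK : 0 < K) by (unfold K; lra).
  assert (HU : u * K = c - a * p + r).
  { unfold u, xgp. destruct (Req_EM_T a 1) as [e|_]; [lra|].
    rewrite Rabs_right by lra. fold D r. unfold K. field. lra. }
  assert (HX : a * a * p - 2 * c * (2 - a) > 0) by nra.
  apply finish; auto.
  - apply (Rmult_eq_reg_r (K * K)); [|nra].
    rewrite gf_scaled, HU. unfold K. rewrite Rmult_0_l.
    replace ((1 - a) * (c - a * p + r) * (c - a * p + r) - (- (a * p) + c) * (c - a * p + r) * (2 * (1 - a)) -
             - (c * p) * (2 * (1 - a) * (2 * (1 - a))))
      with ((1 - a) * (r * r - ((c - a * p) ^ 2 - 4 * c * p * (1 - a)))) by ring.
    rewrite Hrr, HDv. ring.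
  - assert (HY : 0 < a * p - c).
    { assert (a * (a * p - c) > 0) by nra. nra. }
    assert (r < a * p - c).
    { apply sq_lt; [lra|lra|]. rewrite Hrr, HDv.
      assert (0 < c * p * (1 - a)) by (apply Rmult_lt_0_compat; [nra|lra]). nra. }
    nra.
  - unfold Af.
    set (L := a * a * p - (2 - a) * c).
    assert (HL : 0 < L) by (unfold L; nra).
    assert (HLY : L < (2 - a) * r).
    { apply sq_lt; [nra|lra|].
      replace ((2 - a) * r * ((2 - a) * r)) with ((2 - a) * (2 - a) * (r * r)) by ring.
      rewrite Hrr, HDv. unfold L.
      assert (0 < 2 * a * a * p * (1 - a) + a * a * c * (2 - a) - c * (2 - a) ^ 3).
      { assert (2 * a * a * p * (1 - a) > 4 * c * (2 - a) * (1 - a)) by nra. nra. }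
      nra. }
    assert (((2 - a) * (u * K) + a * p * K) > 0).
    { rewrite HU. unfold K. unfold L in HLY. nra. }
    nra.
Qed.

Lemma case3 a c p : 0 < a -> 0 < c -> 0 < p -> 1 <= a ->
  0 < p * (a * a * p - 2 * c * (2 - a)) ->
  let u := xgm a (- (a * p)) c (- (c * p)) in
  u <= xDeltam a (- (a * p)) c (- (c * p)) /\ u < 0 /\
  (forall n : nat, 0 < (-1) ^ n * Wr a (- (a * p)) c (- (c * p)) n u) /\
  (u <> xDeltam a (- (a * p)) c (- (c * p)) ->
     limit_of_zeros a (- (a * p)) c (- (c * p)) (RtoC u) /\
     isolated a (- (a * p)) c (- (c * p)) (RtoC u)).
Proof.
  intros Ha Hc Hp Ha1 HF u.
  assert (HD := Dpos a c p Ha Hc Hp HF).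
  assert (HX : a * a * p - 2 * c * (2 - a) > 0) by nra.
  destruct (Req_EM_T a 1) as [e|ne].
  - subst a.
    assert (HU : u * (c - p) = c * p).
    { unfold u, xgm. destruct (Req_EM_T 1 1) as [_|n]; [|lra]. field. lra. }
    assert (Hcp : c - p < 0) by lra.
    apply finish; auto.
    + unfold gf, Af, Bf. nra.
    + nra.
    + unfold Af. nra.
  - assert (Ha1' : 1 < a) by lra.
    set (D := Deltag a (- (a * p)) c (- (c * p))) in *.
    set (r := sqrt D).
    assert (Hr : 0 < r) by (apply sqrt_lt_R0; lra).
    assert (Hrr : r * r = D) by (apply sqrt_sqrt; lra).
    assert (HDv : D = (c - a * p) ^ 2 - 4 * c * p * (1 - a)) by (unfold D; apply Dg_val).
    set (K := 2 * (a - 1)).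
    assert (HK : 0 < K) by (unfold K; lra).
    assert (HU : u * K = a * p - c - r).
    { unfold u, xgm. destruct (Req_EM_T a 1) as [e|_]; [lra|].
      rewrite Rabs_left by lra. fold D r. unfold K. field. lra. }
    apply finish; auto.
    + apply (Rmult_eq_reg_r (K * K)); [|nra].
      rewrite gf_scaled, HU. unfold K. rewrite Rmult_0_l.
      replace ((1 - a) * (a * p - c - r) * (a * p - c - r) - (- (a * p) + c) * (a * p - c - r) * (2 * (a - 1)) -
               - (c * p) * (2 * (a - 1) * (2 * (a - 1))))
        with ((1 - a) * (r * r - ((c - a * p) ^ 2 - 4 * c * p * (1 - a)))) by ring.
      rewrite Hrr, HDv. ring.
    + assert (a * p - c < r).
      { destruct (Rle_dec (a * p - c) 0); [lra|].
        apply sq_lt; [lra|lra|]. rewrite Hrr, HDv.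
        assert (0 < c * p * (a - 1)) by (apply Rmult_lt_0_compat; [nra|lra]). nra. }
      nra.
    + unfold Af.
      set (L := a * a * p - (2 - a) * c).
      assert (HLY : (2 - a) * r < L).
      { destruct (Rle_dec 2 a).
        - unfold L. nra.
        - assert (HL : 0 < L) by (unfold L; nra).
          apply sq_lt; [lra|nra|].
          replace ((2 - a) * r * ((2 - a) * r)) with ((2 - a) * (2 - a) * (r * r)) by ring.
          rewrite Hrr, HDv. unfold L.
          assert (0 < 2 * a * a * p * (a - 1) - a * a * c * (2 - a) + c * (2 - a) ^ 3).
          { assert (2 * a * a * p * (a - 1) > 4 * c * (2 - a) * (a - 1)) by nra. nra. }
          nra. }
      assert (((2 - a) * (u * K) + a * p * K) > 0).
      { rewrite HU. unfold K. unfold L in HLY. nra. }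
      nra.
Qed.

Theorem lemma3p5 (a b c d : R) :
  0 < a -> 0 < c -> b < 0 -> d < 0 -> xA a b = xB c d ->
  uu a b c d <= xDeltam a b c d /\
  uu a b c d < 0 /\
  (forall n : nat, 0 < (-1) ^ n * Wr a b c d n (uu a b c d)) /\
  (uu a b c d <> xDeltam a b c d ->
     limit_of_zeros a b c d (RtoC (uu a b c d)) /\
     isolated a b c d (RtoC (uu a b c d))).
Proof.
  intros Ha Hc Hb Hd Hx.
  assert (Hex : exists p, 0 < p /\ b = - (a * p) /\ d = - (c * p)).
  { exists (xA a b). split; [|split].
    - unfold xA. apply Rdiv_lt_0_compat; lra.
    - unfold xA. field. lra.
    - rewrite Hx. unfold xB. field. lra. }
  destruct Hex as [p [Hp [-> ->]]].
  unfold uu. rewrite Fq_val by auto.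
  destruct (Rlt_dec a 2) as [Ha2|Ha2].
  - destruct (Rle_dec (p * (a * a * p - 2 * c * (2 - a))) 0) as [HF|HF].
    + exact (case1 a c p Ha Hc Hp HF).
    + destruct (Rlt_dec a 1) as [Ha1|Ha1].
      * exact (case2 a c p Ha Hc Hp Ha1 ltac:(lra)).
      * exact (case3 a c p Ha Hc Hp ltac:(lra) ltac:(lra)).
  - apply (case3 a c p Ha Hc Hp ltac:(lra)).
    assert (0 < a * a * p - 2 * c * (2 - a)) by nra. nra.
Qed.
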